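(* Let $d\ge2$ be an integer, $X,Y$ disjoint finite sets with $|X|=m$, $|Y|=n$, and $\Gamma$ a symmetric matrix indexed by $X\cup Y$ with entries in $\mathbb{Z}_d$ and zero diagonal. Let $f\ge0$ be an integer and suppose that for every subset $Z\subset Y$ with $|Z|\le 2f$ the $(Y\setminus Z)\times(X\cup Z)$-submatrix of $\Gamma$ is non-singular over $\mathbb{Z}_d$, i.e. $\sum_{x\in X\cup Z}\Gamma_{yx}h_x\equiv0 \pmod d$ for all $y\in Y\setminus Z$ implies $h_x\equiv0\pmod d$ for all $x\in X\cup Z$. Then the graph code $V_\Gamma:\mathcal{H}_X\to\mathcal{H}_Y$ corrects $f$ errors.
   Context: For each $x\in X\cup Y$ let $\mathcal{H}_x\cong\mathbb{C}^d$ with orthonormal basis $|j\rangle$, $j\in\mathbb{Z}_d$; $\mathcal{H}_W=\bigotimes_{x\in W}\mathcal{H}_x$ with product basis $|j_W\rangle$. The graph code $V_\Gamma:\mathcal{H}_X\to\mathcal{H}_Y$ is defined by $\langle j_Y|V_\Gamma|j_X\rangle=d^{-n/2}\exp\bigl(\frac{i\pi}{d}\sum_{x,y\in X\cup Y}j_x\Gamma_{xy}j_y\bigr)$. Identify $\mathcal{H}_Y$ with $\mathcal{H}^{\otimes n}$, $\mathcal{H}=\mathbb{C}^d$. Let $\mathcal{E}_f$ be the linear span of all operators $A_1\otimes\cdots\otimes A_n$ on $\mathcal{H}^{\otimes n}$ with $A_i\ne\mathbb{1}$ for at most $f$ indices $i$. A linear map $V:\mathcal{H}_X\to\mathcal{H}^{\otimes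 n}$ corrects $f$ errors if it satisfies the Knill–Laflamme condition for $\mathcal{E}_f$: for all $F_1,F_2\in\mathcal{E}_f$ there is a number $\omega(F_1^*F_2)$ such that $\langle V\phi_1,F_1^*F_2V\phi_2\rangle=\langle\phi_1,\phi_2\rangle\,\omega(F_1^*F_2)$ for all $\phi_1,\phi_2\in\mathcal{H}_X$. *)

(* Defs.v *)
(* complex numbers are modelled by algC (the phases are
   roots of unity and d^{-n/2} is algebraic, so algC suffices). *)
From HB Require Import structures.
From mathcomp Require Import all_boot all_order all_algebra all_field.
Set Implicit Arguments. Unset Strict Implicit. Unset Printing Implicit Defensive.
Import Order.TTheory GRing.Theory Num.Theory.
Local Open Scope ring_scope.

(* product basis labels |j_W>, j_W : W -> Z_d *)
Definition cfg (d : nat) (W : finType) := {ffun W -> 'Z_d}.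
(* vectors of H_W = (C^d)^{(x) W}, as coordinate functions in the product basis *)
Definition vec (d : nat) (W : finType) := cfg d W -> algC.
(* operators on H_W, as matrices  <j|F|k> = F j k *)
Definition op (d : nat) (W : finType) := cfg d W -> cfg d W -> algC.

Definition dotp (d : nat) (W : finType) (a b : vec d W) : algC :=
  \sum_(j : cfg d W) (a j)^* * b j.
Definition op_apply (d : nat) (W : finType) (F : op d W) (a : vec d W) : vec d W :=
  fun j => \sum_(k : cfg d W) F j k * a k.
Definition op_adj (d : nat) (W : finType) (F : op d W) : op d W :=
  fun j k => (F k j)^*.
Definition op_mul (d : nat) (W : finType) (F G : op d W) : op d W :=
  fun j k => \sum_(l : cfg d W) F j l * G l k.

Definition local_op (d : nat) := 'Z_d -> 'Z_d -> algC.
Definition is_id (d : nat) (A : local_op d) : Prop :=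
  forall j k : 'Z_d, A j k = (j == k)%:R.
Definition tensor_op (d : nat) (Y : finType) (A : Y -> local_op d) : op d Y :=
  fun j k => \prod_(y : Y) A y (j y) (k y).
Definition supp_le (d : nat) (Y : finType) (f : nat) (A : Y -> local_op d) : Prop :=
  exists S : {set Y}, (#|S| <= f)%N /\ forall y, y \notin S -> is_id (A y).
Definition in_E (d : nat) (Y : finType) (f : nat) (F : op d Y) : Prop :=
  exists (N : nat) (c : 'I_N -> algC) (A : 'I_N -> Y -> local_op d),
    (forall i, supp_le f (A i)) /\
    forall j k, F j k = \sum_(i < N) c i * tensor_op (A i) j k.

(* linear maps H_X -> H_Y, as matrices <j_Y|V|j_X> *)
Definition code (d : nat) (X Y : finType) := cfg d Y -> cfg d X -> algC.
Definition code_apply (d : nat) (X Y : finType) (V : code d X Y) (phi : vec d X)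
  : vec d Y := fun jY => \sum_(jX : cfg d X) V jY jX * phi jX.

Definition join (d : nat) (X Y : finType) (jX : cfg d X) (jY : cfg d Y)
  (u : X + Y) : 'Z_d :=
  match u with inl x => jX x | inr y => jY y end.

(* graph code: <j_Y|V_G|j_X> = d^{-n/2} exp(i pi/d sum_{u,v} j_u G_uv j_v),
   with exp(i pi / d) = d.-root (-1) (principal root) and the exponent computed
   on the representatives 0..d-1 (well defined since G is symmetric with zero
   diagonal). *)
Definition graph_code (d : nat) (X Y : finType) (G : X + Y -> X + Y -> 'Z_d)
  : code d X Y :=
  fun jY jX =>
    (sqrtC (d%:R : algC)) ^- #|Y| *
    (d.-root (-1 : algC)) ^+
      (\sum_(u : X + Y) \sum_(v : X + Y)
          (nat_of_ord (join jX jY u)) * (nat_of_ord (G u v)) *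
          (nat_of_ord (join jX jY v)))%N.

(* Knill-Laflamme condition for E_f *)
Definition corrects (d : nat) (X Y : finType) (f : nat) (V : code d X Y) : Prop :=
  forall F1 F2 : op d Y, in_E f F1 -> in_E f F2 ->
    exists w : algC, forall phi1 phi2 : vec d X,
      dotp (code_apply V phi1) (op_apply (op_mul (op_adj F1) F2) (code_apply V phi2))
      = dotp phi1 phi2 * w.

Definition inXZ (X Y : finType) (Z : {set Y}) (u : X + Y) : bool :=
  match u with inl _ => true | inr y => y \in Z end.

(* Main.v *)
Require Import Defs.
From HB Require Import structures.
From mathcomp Require Import all_boot all_order all_algebra all_field.
From mathcomp Require Import ring zify.
Import Order.TTheory GRing.Theory Num.Theory.
Local Open Scope ring_scope.

Lemma N1_neq1 : (-1 : algC) != 1.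
Proof. by rewrite eq_sym -subr_eq0 opprK -mulr2n pnatr_eq0. Qed.

Lemma norm_unity {y : algC} {n} : (0 < n)%N -> y ^+ n = 1 \/ y ^+ n = -1 -> `|y| = 1.
Proof.
move=> n0 h; apply/eqP; rewrite -(pexpr_eq1 n0) ?normr_ge0 // -normrX.
by case: h => ->; rewrite ?normrN normr1.
Qed.

Lemma conj_unit {y : algC} : `|y| = 1 -> y * y^* = 1.
Proof. by move=> h; rewrite -normCK h expr1n. Qed.

Lemma norm_sub1 {y : algC} : `|y| = 1 -> `|y - 1| ^+ 2 = 2 - 2 * 'Re y.
Proof.
move=> h; rewrite normCK rmorphB rmorph1 ReE.
have hy := conj_unit h.
have h2 : (2 : algC) != 0 by rewrite pnatr_eq0.
rewrite [2 * _]mulrC mulfVK //.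
transitivity (y * y^* - y - y^* + 1); first by ring.
by rewrite hy; ring.
Qed.

Lemma norm_unity' {y : algC} {n} : (0 < n)%N -> `|y ^+ n| = 1 -> `|y| = 1.
Proof.
move=> n0 h; apply/eqP; rewrite -(pexpr_eq1 n0) ?normr_ge0 // -normrX h //.
Qed.

Lemma geom0 (lam : algC) m : lam ^+ m = 1 -> lam != 1 -> \sum_(i < m) lam ^+ i = 0.
Proof.
move=> h1 h2; have := subrX1 lam m; rewrite h1 subrr => /esym/eqP.
by rewrite mulf_eq0 subr_eq0 (negPf h2) /= => /eqP.
Qed.

Lemma fejer (w y0 rho : algC) (m : nat) :
  (1 < m)%N -> m.-primitive_root rho -> y0 ^+ m = w -> `|w| = 1 -> w != 1 ->
  (forall i : 'I_m, 'Re (y0 * rho ^+ i) <= 'Re w) -> False.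
Proof.
move=> m1 prho hy0 hw w1 hRe.
have m0 : (0 < m)%N := ltnW m1.
have ny0 : `|y0| = 1 by apply: (norm_unity' m0); rewrite hy0.
have rhom := prim_expr_order prho.
have nrho : `|rho| = 1 by apply: (norm_unity' m0); rewrite rhom normr1.
pose y (i : nat) := y0 * rho ^+ i.
have ny i : `|y i| = 1 by rewrite normrM normrX ny0 nrho expr1n mulr1.
have ym i : y i ^+ m = w.
  by rewrite exprMn -exprM mulnC exprM rhom expr1n mulr1.
pose S (i : nat) := \sum_(a < m) y i ^+ a.
have hS i : (y i - 1) * S i = w - 1 by rewrite -subrX1 ym.
have A0 : 0 < `|w - 1| ^+ 2 by rewrite exprn_gt0 // normr_gt0 subr_eq0.
have hle (i : 'I_m) : `|S i| ^+ 2 <= 1.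
  have e : `|S i| ^+ 2 * `|y i - 1| ^+ 2 = `|w - 1| ^+ 2.
    by rewrite -exprMn -normrM mulrC hS.
  have le : `|w - 1| ^+ 2 <= `|y i - 1| ^+ 2.
    by rewrite !norm_sub1 // lerD2l lerN2 ler_pM2l ?hRe.
  by rewrite -(ger_pMl _ (lt_le_trans A0 le)) e.
have sum_le : \sum_(i < m) `|S i| ^+ 2 <= m%:R.
  by apply: le_trans (ler_sum _ (fun i _ => hle i)) _; rewrite sumr_const card_ord.
have inner (a b : 'I_m) :
    \sum_(i < m) y i ^+ a * (y i ^+ b)^* = if b == a then m%:R else 0.
  case: eqP => [->|/eqP ab].
    under eq_bigr do rewrite -normCK normrX ny !expr1n.
    by rewrite sumr_const card_ord.
  pose lam := rho ^+ a * rho^* ^+ b.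
  have -> : \sum_(i < m) y i ^+ a * (y i ^+ b)^* =
            (y0 ^+ a * y0^* ^+ b) * \sum_(i < m) lam ^+ i.
    rewrite mulr_sumr; apply: eq_bigr => i _.
    rewrite /y /lam !rmorphXn rmorphM /= rmorphXn.
    by rewrite !exprMn -!exprM [(i * a)%N]mulnC [(i * b)%N]mulnC; ring.
  have hc : rho^* * rho = 1 by rewrite mulrC conj_unit.
  rewrite geom0 ?mulr0 //.
    by rewrite /lam exprMn -!exprM ![(_ * m)%N]mulnC !exprM -rmorphXn rhom rmorph1 !expr1n mulr1.
  apply/eqP => hl; move: ab; rewrite -(inj_eq val_inj) /=.
  have : rho ^+ a = rho ^+ b.
    by rewrite -[rho ^+ a]mulr1 -(expr1n _ b) -hc exprMn mulrA -/lam hl mul1r.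
  move/eqP; rewrite (eq_prim_root_expr prho) !modn_small //.
  by move=> /eqP ->; rewrite eqxx.
have sum_eq : \sum_(i < m) `|S i| ^+ 2 = (m * m)%:R.
  transitivity (\sum_(i < m) \sum_(a < m) \sum_(b < m) y i ^+ a * (y i ^+ b)^*).
    apply: eq_bigr => i _; rewrite normCK /S rmorph_sum mulr_suml.
    by apply: eq_bigr => a _; rewrite mulr_sumr.
  rewrite exchange_big /=.
  under eq_bigr do rewrite exchange_big /=.
  under eq_bigr do under eq_bigr do rewrite inner.
  under eq_bigr do rewrite -big_mkcond /= big_pred1_eq.
  by rewrite sumr_const card_ord natrM mulr_natr.
move: sum_le; rewrite sum_eq ler_nat.
move=> h; clear -h m1; nia.
Qed.

Lemma Re_le_root n (y : algC) : (1 < n)%N -> y ^+ n = -1 -> 'Re y <= 'Re (n.-root (-1)).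
Proof.
move=> n1 hy; have n0 := ltnW n1.
case: (boolP (0 <= 'Im y)) => h; first exact: rootC_Re_max.
rewrite -Re_conj; apply: rootC_Re_max => //.
  by rewrite -rmorphXn hy rmorphN1.
rewrite Im_conj oppr_ge0; apply: ltW.
by rewrite real_ltNge ?Creal_Im ?real0.
Qed.

Lemma om_prim n k : (1 < n)%N -> (0 < k < n)%N -> (n.-root (-1 : algC)) ^+ (2 * k) != 1.
Proof.
move=> n1 /andP[k0 kn]; set w := n.-root (-1 : algC); apply/negP => /eqP hk.
have n0 := ltnW n1.
have wn : w ^+ n = -1 by rewrite /w rootCK.
have w2n : w ^+ (2 * n) = 1 by rewrite mulnC exprM wn sqrrN expr1n.
have n20 : (0 < 2 * n)%N by rewrite muln_gt0 n0.
have [o po o2n] := prim_order_exists n20 w2n.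
have o0 := prim_order_gt0 po.
have ok : (o %| 2 * k)%N by rewrite (prim_order_dvd po) hk.
have ond : ~~ (o %| n)%N by rewrite (prim_order_dvd po) wn N1_neq1.
have oev : ~~ odd o.
  apply/negP => oo; move: o2n; rewrite Gauss_dvdr ?coprimen2 //.
  by move/negP: ond.
set e := o./2.
have oe : o = (2 * e)%N by rewrite mul2n -[LHS]odd_double_half (negPf oev).
have en : (e %| n)%N by move: o2n; rewrite oe dvdn_pmul2l.
have ek : (e %| k)%N by move: ok; rewrite oe dvdn_pmul2l.
have e0 : (0 < e)%N by move: o0; rewrite oe muln_gt0.
have elt : (e < n)%N by apply: leq_ltn_trans (dvdn_leq k0 ek) kn.
have we : w ^+ e = -1.
  have : (w ^+ e) ^+ 2 == 1 by rewrite -exprM mulnC -oe prim_expr_order.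
  rewrite sqrf_eq1 => /orP[/eqP h1|/eqP //].
  have : (o %| e)%N by rewrite (prim_order_dvd po) h1.
  by move/(dvdn_leq e0); rewrite oe; clear -e0; lia.
set m := (n %/ e)%N.
have nme : n = (m * e)%N by rewrite divnK.
have m1 : (1 < m)%N by move: elt; rewrite nme; clear -e0; nia.
have m0 := ltnW m1.
have hy0 : (m.-root w) ^+ m = w by rewrite rootCK.
have [rho prho] := C_prim_root_exists m0.
apply: (fejer _ _ _ _ m1 prho hy0).
- by apply: (norm_unity n0); right.
- by apply/eqP => w1; move: wn; rewrite w1 expr1n => /eqP; rewrite eq_sym (negPf N1_neq1).
move=> i; apply: Re_le_root => //.
rewrite nme exprMn exprM hy0 we -exprM mulnC exprM exprM (prim_expr_order prho).
by rewrite expr1n expr1n mulr1.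
Qed.

Definition zeta (p : nat) : algC := (p.+2.-root (-1)) ^+ 2.
Definition chi {p : nat} (x : 'Z_p.+2) : algC := zeta p ^+ (x : nat).

Lemma zeta_d p : zeta p ^+ p.+2 = 1.
Proof. by rewrite /zeta -exprM mulnC exprM rootCK // sqrrN expr1n. Qed.

Lemma chiD {p} (x y : 'Z_p.+2) : chi (x + y) = chi x * chi y.
Proof. by rewrite /chi /= (expr_mod _ (zeta_d p)) exprD. Qed.

Lemma chi0 {p} : chi (0 : 'Z_p.+2) = 1.
Proof. by rewrite /chi expr0. Qed.

Lemma chi_norm {p} (x : 'Z_p.+2) : `|chi x| = 1.
Proof.
apply: (norm_unity' (ltn0Sn p.+1)).
by rewrite -exprM mulnC exprM zeta_d expr1n normr1.
Qed.

Lemma chiN {p} (x : 'Z_p.+2) : chi (- x) * chi x = 1.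
Proof. by rewrite -chiD addNr chi0. Qed.

Lemma chi_conj {p} (x : 'Z_p.+2) : (chi x)^* = chi (- x).
Proof.
have h := conj_unit (chi_norm x).
have hu : chi x != 0 by rewrite -normr_eq0 chi_norm oner_eq0.
apply: (mulIf hu); rewrite chiN mulrC //.
Qed.

Lemma chi_eq1 {p} (x : 'Z_p.+2) : chi x = 1 -> x = 0.
Proof.
move=> h; apply/val_inj => /=; move: h; rewrite /chi /zeta -exprM.
case: (posnP (x : nat)) => [//|x0] h; exfalso.
have := @om_prim p.+2 x isT; rewrite x0 ltn_ord h eqxx.
by move/(_ isT).
Qed.

Lemma chi_nat p n : chi (n%:R : 'Z_p.+2) = zeta p ^+ n.
Proof. by rewrite /chi val_Zp_nat // (expr_mod _ (zeta_d p)). Qed.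

Lemma chi_sum p (I : finType) (F : I -> 'Z_p.+2) :
  chi (\sum_i F i) = \prod_i chi (F i).
Proof. by apply: (big_morph _ (@chiD p) (@chi0 p)). Qed.

Definition rk {T : finType} (u : T) : nat := enum_rank u.

Lemma split_pairs {R : Type} {idx : R} (op : Monoid.com_law idx) {T : finType}
    (F : T -> T -> R) :
  \big[op/idx]_u \big[op/idx]_v F u v =
  op (op (\big[op/idx]_u \big[op/idx]_v (if (rk u < rk v)%N then F u v else idx))
         (\big[op/idx]_u \big[op/idx]_v (if (rk u < rk v)%N then F v u else idx)))
     (\big[op/idx]_u F u u).
Proof.
rewrite [X in op (op _ X) _]exchange_big /=.
have -> : \big[op/idx]_u F u u =
          \big[op/idx]_u \big[op/idx]_v (if v == u then F u v else idx).
  apply: eq_bigr => u _; rewrite -big_mkcond /= big_pred1_eq //.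
rewrite -!big_split /=; apply: eq_bigr => u _; rewrite -!big_split /=.
apply: eq_bigr => v _.
case: (ltngtP (rk u) (rk v)) => h.
- case: eqP => [e|_]; last by rewrite !Monoid.simpm.
  by move: h; rewrite e ltnn.
- case: eqP => [e|_]; last by rewrite !Monoid.simpm.
  by move: h; rewrite e ltnn.
- have e : v = u by apply: enum_rank_inj; apply: val_inj; rewrite /= -/(rk u) -/(rk v) h.
  by rewrite e eqxx !Monoid.simpm.
Qed.

Definition qf {p} {T : finType} (G : T -> T -> 'Z_p.+2) (J : T -> 'Z_p.+2) : 'Z_p.+2 :=
  \sum_u \sum_v (if (rk u < rk v)%N then J u * G u v * J v else 0).
Definition bf {p} {T : finType} (G : T -> T -> 'Z_p.+2) (J t : T -> 'Z_p.+2) : 'Z_p.+2 :=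
  \sum_u \sum_v J u * G u v * t v.

Lemma phase_qf p (T : finType) (G : T -> T -> 'Z_p.+2) (J : T -> 'Z_p.+2) :
  (forall u v, G u v = G v u) -> (forall u, G u u = 0) ->
  (p.+2.-root (-1 : algC)) ^+
     (\sum_u \sum_v (nat_of_ord (J u)) * nat_of_ord (G u v) * nat_of_ord (J v))%N
  = chi (qf G J).
Proof.
move=> sym diag.
rewrite (split_pairs addn) /=.
set A := (\sum_u _)%N.
have -> : (\sum_u \sum_v (if (rk u < rk v)%N then
              (nat_of_ord (J v)) * nat_of_ord (G v u) * nat_of_ord (J u) else 0))%N = A.
  apply: eq_bigr => u _; apply: eq_bigr => v _.
  by case: ifP => _ //; rewrite (sym v u); ring.
have -> : (\sum_u (nat_of_ord (J u)) * nat_of_ord (G u u) * nat_of_ord (J u))%N = 0%N.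
  by apply: big1 => u _; rewrite diag muln0 mul0n.
rewrite addn0 addnn -mul2n exprM -/(zeta p) -chi_nat.
congr chi; rewrite /A /qf natr_sum; apply: eq_bigr => u _.
rewrite natr_sum; apply: eq_bigr => v _.
by case: ifP => _ //; rewrite !natrM !natr_Zp.
Qed.

Lemma qf_ext {p} {T : finType} (G : T -> T -> 'Z_p.+2) {J1 J2 : T -> 'Z_p.+2} :
  J1 =1 J2 -> qf G J1 = qf G J2.
Proof.
by move=> e; apply: eq_bigr => u _; apply: eq_bigr => v _; rewrite !e.
Qed.

Lemma qfD p (T : finType) (G : T -> T -> 'Z_p.+2) (J t : T -> 'Z_p.+2) :
  (forall u v, G u v = G v u) -> (forall u, G u u = 0) ->
  qf G (fun u => J u + t u) = qf G J + qf G t + bf G J t.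
Proof.
move=> sym diag.
rewrite /bf (split_pairs +%R) /=.
have -> : \sum_u J u * G u u * t u = 0 by apply: big1 => u _; rewrite diag mulr0 mul0r.
rewrite addr0 /qf -!big_split /=; apply: eq_bigr => u _.
rewrite -!big_split /=; apply: eq_bigr => v _.
case: ifP => _; last by rewrite !addr0.
rewrite (sym v u); ring.
Qed.

Definition tr {p} {Y : finType} (j t : cfg p.+2 Y) : cfg p.+2 Y := [ffun y => j y + t y].
Definition rs {p} {Y : finType} (S : {set Y}) (t : cfg p.+2 Y) : cfg p.+2 Y :=
  [ffun y => if y \in S then 0 else t y].

Lemma tr_inj {p} {Y : finType} (t : cfg p.+2 Y) : injective (fun j => tr j t).
Proof.
move=> j1 j2 /= /ffunP e; apply/ffunP => y; have := e y; rewrite !ffunE.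
by move/addIr.
Qed.

Lemma card_cfg_neq0 p (Y : finType) : (#|{: cfg p.+2 Y}|%:R : algC) != 0.
Proof.
rewrite pnatr_eq0 -lt0n; apply/card_gt0P; by exists [ffun => 0].
Qed.

Lemma char_sum p (Y : finType) (S : {set Y}) (s : Y -> 'Z_p.+2) :
  \sum_(t : cfg p.+2 Y) chi (\sum_y s y * rs S t y) =
  if [forall y, (y \in S) || (s y == 0)] then #|{: cfg p.+2 Y}|%:R else 0.
Proof.
case: forallP => [h|/forallP/forallPn [y0]].
  rewrite -sumr_const; apply: eq_bigr => t _.
  rewrite big1 ?chi0 // => y _; rewrite ffunE.
  by case/orP: (h y) => [->|/eqP->]; rewrite ?mulr0 ?mul0r.
rewrite negb_or => /andP[y0S sy0].
pose e : cfg p.+2 Y := [ffun y => if y == y0 then 1 else 0].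
set Sm := \sum_t _.
have : Sm = chi (s y0) * Sm.
  rewrite {1}/Sm (reindex_inj (tr_inj e)) /= mulr_sumr; apply: eq_bigr => t _.
  rewrite mulrC -chiD; congr chi.
  rewrite (bigD1 y0) //= [in RHS](bigD1 y0) //= !ffunE eqxx (negPf y0S) -addrA.
  rewrite [_ + s y0]addrC addrA mulrDr mulr1; congr (_ + _).
  apply: eq_bigr => y yy0; rewrite !ffunE (negPf yy0) addr0.
  by case: (y \in S).
move/eqP; rewrite -subr_eq0 -{1}[Sm]mul1r -mulrBl mulf_eq0 subr_eq0 => /orP[|/eqP //].
by move/eqP/esym/chi_eq1/eqP; rewrite (negPf sy0).
Qed.

Lemma avg p (Y : finType) (S : {set Y}) (a : cfg p.+2 Y -> cfg p.+2 Y -> algC)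
  (s : cfg p.+2 Y -> cfg p.+2 Y -> Y -> 'Z_p.+2) :
  (forall t j l, a (tr j (rs S t)) (tr l (rs S t)) = a j l * chi (\sum_y s j l y * rs S t y)) ->
  \sum_j \sum_l a j l =
  \sum_j \sum_l (if [forall y, (y \in S) || (s j l y == 0)] then a j l else 0).
Proof.
move=> h.
have step t : \sum_j \sum_l a j l = \sum_j \sum_l a j l * chi (\sum_y s j l y * rs S t y).
  rewrite (reindex_inj (tr_inj (rs S t))); apply: eq_bigr => j _.
  rewrite (reindex_inj (tr_inj (rs S t))); apply: eq_bigr => l _.
  exact: h.
have : \sum_(t : cfg p.+2 Y) \sum_j \sum_l a j l =
        \sum_(t : cfg p.+2 Y) \sum_j \sum_l a j l * chi (\sum_y s j l y * rs S t y).
  by apply: eq_bigr => t _; exact: step.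
have e2 : \sum_(t : cfg p.+2 Y) \sum_j \sum_l a j l * chi (\sum_y s j l y * rs S t y) =
    \sum_j \sum_l a j l *
      (if [forall y, (y \in S) || (s j l y == 0)] then #|{: cfg p.+2 Y}|%:R else 0).
  rewrite exchange_big; apply: eq_bigr => j _; rewrite exchange_big.
  by apply: eq_bigr => l _; rewrite -mulr_sumr char_sum.
rewrite e2 sumr_const => e; apply: (mulIf (card_cfg_neq0 p Y)).
rewrite mulr_natr e mulr_suml.
apply: eq_bigr => j _; rewrite mulr_suml; apply: eq_bigr => l _.
by case: ifP; rewrite ?mulr0 ?mul0r.
Qed.

Lemma gc_chi p (X Y : finType) (G : X + Y -> X + Y -> 'Z_p.+2) :
  (forall u v, G u v = G v u) -> (forall u, G u u = 0) ->
  forall jY jX, graph_code G jY jX = (sqrtC (p.+2)%:R) ^- #|Y| * chi (qf G (join jX jY)).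
Proof. by move=> sym diag jY jX; rewrite /graph_code phase_qf. Qed.

Lemma key p (X Y : finType) (G : X + Y -> X + Y -> 'Z_p.+2) (f : nat) :
  (forall u v, G u v = G v u) ->
  (forall u, G u u = 0) ->
  (forall Z : {set Y}, (#|Z| <= 2 * f)%N ->
     forall h : X + Y -> 'Z_p.+2,
       (forall y : Y, y \notin Z ->
          \sum_(u : X + Y | inXZ Z u) G (inr y) u * h u = 0) ->
       forall u, inXZ Z u -> h u = 0) ->
  forall (B : Y -> local_op p.+2) (S : {set Y}), (#|S| <= 2 * f)%N ->
  (forall y, y \notin S -> is_id (B y)) ->
  forall jX kX : cfg p.+2 X,
  \sum_jY \sum_lY (graph_code G jY jX)^* * tensor_op B jY lY * graph_code G lY kX
  = (jX == kX)%:R * (((sqrtC (p.+2)%:R) ^- #|Y|)^* * (sqrtC (p.+2)%:R) ^- #|Y|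
                     * \sum_jY tensor_op B jY jY).
Proof.
move=> sym diag ns B S hS hB jX kX.
pose c : algC := (sqrtC (p.+2)%:R) ^- #|Y|.
have gc := @gc_chi p X Y G sym diag.
pose a jY lY := (graph_code G jY jX)^* * tensor_op B jY lY * graph_code G lY kX.
pose h (jY lY : cfg p.+2 Y) u := join kX lY u - join jX jY u.
pose s jY lY y := \sum_u G (inr y) u * h jY lY u.
have trans t j l : a (tr j (rs S t)) (tr l (rs S t)) = a j l * chi (\sum_y s j l y * rs S t y).
  set t' := rs S t.
  have Tinv : tensor_op B (tr j t') (tr l t') = tensor_op B j l.
    rewrite /tensor_op; apply: eq_bigr => y _; rewrite /t' !ffunE.
    case: (boolP (y \in S)) => yS; first by rewrite !addr0.
    by rewrite !(hB y yS) (inj_eq (addIr _)).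
  pose Tt : X + Y -> 'Z_p.+2 := join [ffun => 0] t'.
  have jn jj kk : join kk (tr jj t') =1 (fun u => join kk jj u + Tt u).
    by case => [x|y]; rewrite /Tt /= ?ffunE ?addr0.
  have hb : bf G (join kX l) Tt - bf G (join jX j) Tt = \sum_y s j l y * t' y.
    transitivity (\sum_u \sum_v h j l u * G u v * Tt v).
      rewrite /bf -sumrB; apply: eq_bigr => u _; rewrite -sumrB.
      by apply: eq_bigr => v _; rewrite /h; ring.
    rewrite exchange_big big_sumType /= big1 ?add0r; last first.
      by move=> x _; apply: big1 => u _; rewrite /Tt /= ffunE mulr0.
    apply: eq_bigr => y _; rewrite /s mulr_suml; apply: eq_bigr => u _.
    by rewrite /Tt /= sym; ring.
  rewrite /a !gc Tinv (qf_ext _ (jn j jX)) (qf_ext _ (jn l kX)) !qfD //.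
  rewrite !rmorphM /= !chi_conj.
  have e : chi (- (qf G (join jX j) + qf G Tt + bf G (join jX j) Tt)) *
           chi (qf G (join kX l) + qf G Tt + bf G (join kX l) Tt) =
           chi (- qf G (join jX j)) * chi (qf G (join kX l)) * chi (\sum_y s j l y * t' y).
    by rewrite -!chiD -hb; congr chi; ring.
  transitivity (c^* * c * tensor_op B j l *
     (chi (- (qf G (join jX j) + qf G Tt + bf G (join jX j) Tt)) *
      chi (qf G (join kX l) + qf G Tt + bf G (join kX l) Tt))); first by rewrite -/c; ring.
  by rewrite e -/c; ring.
rewrite (@avg p Y S a s trans).
have pw j l : (if [forall y, (y \in S) || (s j l y == 0)] then a j l else 0) =
              (if (jX == kX) && (l == j) then a j l else 0).
  have [->|anz] := eqVneq (a j l) 0; first by rewrite !if_same.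
  have Tnz : tensor_op B j l != 0.
    by apply: contraNneq anz => T0; rewrite /a T0 mulr0 mul0r.
  have jl y : y \notin S -> j y = l y.
    move=> yS; move/prodf_neq0: Tnz => /(_ y isT).
    by rewrite (hB y yS) pnatr_eq0 eqb0 negbK => /eqP.
  congr (if _ then _ else _); apply/idP/idP.
    move/forallP => hc.
    have hz := ns S hS (h j l).
    have hz' : forall u, inXZ S u -> h j l u = 0.
      apply: hz => y yS; have := hc y; rewrite (negPf yS) /= => /eqP e.
      rewrite -[in RHS]e /s big_mkcond; apply: eq_bigr => -[x|y'] _ //=.
      case: ifP => // y'S; rewrite /h /= jl ?y'S // subrr mulr0 //.
    apply/andP; split.
      apply/eqP/ffunP => x; have := hz' (inl x) isT; rewrite /h /=.
      by move/eqP; rewrite subr_eq0 => /eqP ->.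
    apply/eqP/ffunP => y; case: (boolP (y \in S)) => yS; last by rewrite jl.
    have := hz' (inr y) yS; rewrite /h /=.
    by move/eqP; rewrite subr_eq0 => /eqP.
  case/andP => /eqP ejk /eqP ejl; apply/forallP => y.
  rewrite /s big1 ?eqxx ?orbT // => u _.
  by rewrite /h ejk ejl subrr mulr0.
under eq_bigr do under eq_bigr do rewrite pw.
case: eqP => [ejk|_]; last first.
  by rewrite mul0r big1 // => j _; rewrite big1 // => l _.
rewrite mul1r mulr_sumr; apply: eq_bigr => j _.
rewrite -big_mkcond /= big_pred1_eq /a !gc rmorphM /= chi_conj ejk.
rewrite -/c.
transitivity (c^* * c * tensor_op B j j *
   (chi (- qf G (join kX j)) * chi (qf G (join kX j)))); first by ring.
by rewrite chiN mulr1.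
Qed.

Lemma tensor_prod d (Y : finType) (A1 A2 : Y -> local_op d) (jY lY : cfg d Y) :
  \sum_(mY : cfg d Y) (tensor_op A1 mY jY)^* * tensor_op A2 mY lY =
  tensor_op (fun y j l => \sum_m (A1 y m j)^* * A2 y m l) jY lY.
Proof.
rewrite /tensor_op bigA_distr_bigA /=; apply: eq_bigr => mY _.
by rewrite rmorph_prod -big_split.
Qed.

Lemma supp_prod d (Y : finType) f (A1 A2 : Y -> local_op d) :
  supp_le f A1 -> supp_le f A2 ->
  exists S : {set Y}, (#|S| <= 2 * f)%N /\
    forall y, y \notin S -> is_id (fun j l => \sum_m (A1 y m j)^* * A2 y m l).
Proof.
move=> [S1 [h1 e1]] [S2 [h2 e2]]; exists (S1 :|: S2); split.
  by rewrite cardsU; apply: leq_trans (leq_subr _ _) _; rewrite mul2n -addnn leq_add.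
move=> y; rewrite in_setU negb_or => /andP[y1 y2] j l.
rewrite (bigD1 j) //= e1 // e2 // eqxx rmorph1 mul1r big1 ?addr0 //.
by move=> m /negPf mj; rewrite e1 // mj rmorph0 mul0r.
Qed.

Lemma expandK d (X Y : finType) (V : code d X Y) (M : op d Y) (phi1 phi2 : vec d X) :
  dotp (code_apply V phi1) (op_apply M (code_apply V phi2)) =
  \sum_jX \sum_kX (phi1 jX)^* * phi2 kX *
     (\sum_jY \sum_lY (V jY jX)^* * M jY lY * V lY kX).
Proof.
rewrite /dotp /op_apply /code_apply.
transitivity (\sum_jY \sum_jX \sum_lY \sum_kX
   (phi1 jX)^* * phi2 kX * ((V jY jX)^* * M jY lY * V lY kX)).
  apply: eq_bigr => jY _; rewrite rmorph_sum mulr_suml; apply: eq_bigr => jX _.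
  rewrite mulr_sumr; apply: eq_bigr => lY _; rewrite mulr_sumr mulr_sumr.
  by apply: eq_bigr => kX _; rewrite rmorphM; ring.
rewrite exchange_big; apply: eq_bigr => jX _.
under eq_bigr do rewrite exchange_big.
rewrite exchange_big; apply: eq_bigr => kX _.
by rewrite mulr_sumr; apply: eq_bigr => jY _; rewrite mulr_sumr.
Qed.

Lemma K_lin d (X Y : finType) (I : finType) (e : I -> algC) (T : I -> op d Y) (M : op d Y)
  (V : code d X Y) jX kX :
  (forall j l, M j l = \sum_i e i * T i j l) ->
  \sum_jY \sum_lY (V jY jX)^* * M jY lY * V lY kX =
  \sum_i e i * \sum_jY \sum_lY (V jY jX)^* * T i jY lY * V lY kX.
Proof.
move=> hM.
transitivity (\sum_jY \sum_lY \sum_i e i * ((V jY jX)^* * T i jY lY * V lY kX)).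
  apply: eq_bigr => jY _; apply: eq_bigr => lY _.
  rewrite hM mulr_sumr mulr_suml; apply: eq_bigr => i _; ring.
rewrite [RHS](eq_bigr (fun i => \sum_jY \sum_lY e i * ((V jY jX)^* * T i jY lY * V lY kX))); last first.
  by move=> i _; rewrite mulr_sumr; apply: eq_bigr => jY _; rewrite mulr_sumr.
rewrite [RHS]exchange_big; apply: eq_bigr => jY _.
by rewrite exchange_big.
Qed.

Theorem corollary1 (d : nat) (X Y : finType) (G : X + Y -> X + Y -> 'Z_d) (f : nat) :
  (1 < d)%N ->
  (forall u v, G u v = G v u) ->
  (forall u, G u u = 0) ->
  (forall Z : {set Y}, (#|Z| <= 2 * f)%N ->
     forall h : X + Y -> 'Z_d,
       (forall y : Y, y \notin Z ->
          \sum_(u : X + Y | inXZ Z u) G (inr y) u * h u = 0) ->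
       forall u, inXZ Z u -> h u = 0) ->
  corrects f (graph_code G).
Proof.
case: d G => [|[|p]] // G _ sym diag ns.
move=> F1 F2 [N1 [c1 [A1 [hA1 eF1]]]] [N2 [c2 [A2 [hA2 eF2]]]].
pose c : algC := (sqrtC (p.+2)%:R) ^- #|Y|.
pose M := op_mul (op_adj F1) F2.
exists (c^* * c * \sum_jY M jY jY) => phi1 phi2.
rewrite expandK.
pose e (q : 'I_N1 * 'I_N2) := (c1 q.1)^* * c2 q.2.
pose T (q : 'I_N1 * 'I_N2) : op p.+2 Y :=
  tensor_op (fun y j l => \sum_m (A1 q.1 y m j)^* * A2 q.2 y m l).
have hM : forall j l, M j l = \sum_q e q * T q j l.
  move=> j l; rewrite /M /op_mul /op_adj.
  transitivity (\sum_mY \sum_i1 \sum_i2 (c1 i1)^* * c2 i2 *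
                 ((tensor_op (A1 i1) mY j)^* * tensor_op (A2 i2) mY l)).
    apply: eq_bigr => mY _; rewrite eF1 eF2 rmorph_sum mulr_suml.
    apply: eq_bigr => i1 _; rewrite mulr_sumr; apply: eq_bigr => i2 _.
    by rewrite rmorphM; ring.
  rewrite exchange_big; under eq_bigr do rewrite exchange_big.
  rewrite pair_big /=; apply: eq_bigr => q _.
  by rewrite -mulr_sumr tensor_prod.
have hK jX kX : \sum_jY \sum_lY (graph_code G jY jX)^* * M jY lY * graph_code G lY kX
    = (jX == kX)%:R * (c^* * c * \sum_jY M jY jY).
  rewrite (@K_lin _ _ _ _ e T M (graph_code G) jX kX hM).
  rewrite (eq_bigr (fun q => e q * ((jX == kX)%:R * (c^* * c * \sum_jY T q jY jY)))); last first.
    move=> q _; have [S [hS hB]] := @supp_prod _ _ _ _ _ (hA1 q.1) (hA2 q.2).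
    by rewrite (@key _ _ _ _ _ sym diag ns _ _ hS hB).
  transitivity ((jX == kX)%:R * (c^* * c * \sum_q e q * \sum_jY T q jY jY)).
    by rewrite !mulr_sumr; apply: eq_bigr => q _; ring.
  congr (_ * (_ * _)); under [RHS]eq_bigr do rewrite hM.
  rewrite [RHS]exchange_big /=; apply: eq_bigr => q _; by rewrite mulr_sumr.
under eq_bigr do under eq_bigr do rewrite hK.
rewrite /dotp mulr_suml; apply: eq_bigr => jX _.
rewrite (bigD1 jX) //= eqxx [X in _ + X]big1 ?addr0; first by rewrite mul1r.
by move=> kX; rewrite eq_sym => /negPf ->; rewrite mul0r mulr0.
Qed.
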